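(* Let $H=([n],E)$ be a hypergraph. Then $\Delta_H$ is connected if and only if for every pair of edges $F,F'\in E$ there is a sequence of edges $F=F_1,F_2,\dots,F_r=F'$ such that for each $1\le i\le r-1$, $F_i\cup F_{i+1}\ne[n]$ or $F_i\cap F_{i+1}=\emptyset$.
   Context: A hypergraph $H=([n],E)$ has edges that are nonempty subsets of $[n]$; standing assumptions: every vertex in some edge, no edge of size 1, no edge properly contained in another. The coloring complex $\Delta_H$ is the abstract simplicial complex whose vertices are the nonempty proper subsets of $[n]$ and whose faces are the chains $\emptyset\neq A_1\subsetneq\cdots\subsetneq A_l\neq[n]$ ($l\ge0$) such that, with $A_0=\emptyset$, $A_{l+1}=[n]$, some difference $A_i\setminus A_{i-1}$ ($1\le i\le l+1$) contains an edge of $H$. *)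

(* Defs.v *)
From mathcomp Require Import all_boot.
From Stdlib Require Import Relations.
Set Implicit Arguments. Unset Strict Implicit. Unset Printing Implicit Defensive.

Definition is_hypergraph (n : nat) (E : {set {set 'I_n}}) : Prop :=
  [/\ forall F, F \in E -> F != set0,
      forall x : 'I_n, exists2 F, F \in E & x \in F,
      forall F, F \in E -> #|F| != 1%N
    & forall F G, F \in E -> G \in E -> ~~ (F \proper G)].

(* A chain A_1 ⊊ ... ⊊ A_l (given as the sequence [:: A_1; ...; A_l]) is a
   face of the coloring complex Δ_H: all A_i are nonempty proper subsets,
   the chain is strictly increasing, and with A_0 = ∅, A_{l+1} = [n] some
   difference A_i \ A_{i-1} (1 <= i <= l+1) contains an edge of H. *)
Definition coloring_face (n : nat) (E : {set {set 'I_n}}) (s : seq {set 'I_n}) : bool :=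
  let t := set0 :: rcons s setT in
  [&& sorted (fun A B : {set 'I_n} => A \proper B) s,
      all (fun A : {set 'I_n} => (A != set0) && (A \proper setT)) s &
      has (fun i => [exists F in E, F \subset (nth setT t i.+1 :\: nth set0 t i)])
          (iota 0 (size s).+1)].

Definition coloring_adj (n : nat) (E : {set {set 'I_n}}) (A B : {set 'I_n}) : Prop :=
  coloring_face E [:: A; B] \/ coloring_face E [:: B; A].

(* Δ_H is connected: any two vertices of Δ_H (0-faces) are joined by a path
   of 1-faces. (Vacuously true when Δ_H has no vertices.) *)
Definition coloring_connected (n : nat) (E : {set {set 'I_n}}) : Prop :=
  forall A B : {set 'I_n}, coloring_face E [:: A] -> coloring_face E [:: B] ->
    clos_refl_trans _ (@coloring_adj n E) A B.

Definition edge_step (n : nat) (F G : {set 'I_n}) : bool :=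
  (F :|: G != setT) || [disjoint F & G].

(* Main.v *)
Require Import Defs.
From mathcomp Require Import all_boot.
From Stdlib Require Import Relations.
Set Implicit Arguments. Unset Strict Implicit. Unset Printing Implicit Defensive.

Local Notation rt E := (clos_refl_trans _ (@coloring_adj _ E)).

Lemma face1 n (E : {set {set 'I_n}}) A : coloring_face E [::A] =
  [&& A != set0, A \proper setT &
     [exists F in E, F \subset A] || [exists F in E, F \subset ~:A]].
Proof. rewrite /coloring_face /= setD0 setTD andbT orbF. by case: (A != set0). Qed.

Lemma face2 n (E : {set {set 'I_n}}) A B : coloring_face E [::A; B] =
  [&& A \proper B, (A != set0) && (A \proper setT), (B != set0) && (B \proper setT) &
     [|| [exists F in E, F \subset A], [exists F in E, F \subset B :\: A] |
        [exists F in E, F \subset ~:B]]].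
Proof.
rewrite /coloring_face /= setD0 setTD !andbT orbF.
by case: (A \proper B); case: (A != set0); case: (A \proper setT); case: (B != set0).
Qed.

Lemma setC0P n (A : {set 'I_n}) : (~:A == set0) = (A == setT).
Proof. by rewrite -setCT (inj_eq (@setC_inj _)). Qed.
Lemma setCTP n (A : {set 'I_n}) : (~:A == setT) = (A == set0).
Proof. by rewrite -setC0 (inj_eq (@setC_inj _)). Qed.

Lemma face2_dest n (E : {set {set 'I_n}}) (X Y : {set 'I_n}) : coloring_face E [::X; Y] ->
  [/\ X \proper Y, (X != set0) && (X != setT), (Y != set0) && (Y != setT) &
    exists2 H, H \in E & [|| H \subset X, H \subset Y :\: X | H \subset ~:Y]].
Proof.
rewrite face2 !properT => /and4P[-> -> -> h]; split => //.
case/or3P: h => /existsP[H /andP[HE hH]]; exists H => //; by rewrite hH ?orbT.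
Qed.

Lemma face1_dest n (E : {set {set 'I_n}}) (A : {set 'I_n}) : coloring_face E [::A] ->
  [/\ A != set0, A != setT & exists2 G, G \in E & (G \subset A) || (G \subset ~:A)].
Proof.
rewrite face1 properT => /and3P[-> -> h]; split => //.
case/orP: h => /existsP[H /andP[HE hH]]; exists H => //; by rewrite hH ?orbT.
Qed.

Lemma rt_sym n (E : {set {set 'I_n}}) (A B : {set 'I_n}) : rt E A B -> rt E B A.
Proof.
elim=> [x y h|x|x y z _ h1 _ h2].
- apply: rt_step; by case: h; [right|left].
- exact: rt_refl.
- exact: rt_trans h2 h1.
Qed.

Lemma chain_rt n (E : {set {set 'I_n}}) (A B G : {set 'I_n}) : A \subset B -> A != set0 -> A != setT ->
  B != set0 -> B != setT -> G \in E ->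
  [|| G \subset A, G \subset B :\: A | G \subset ~:B] -> rt E A B.
Proof.
move=> sAB A0 AT B0 BT GE h.
case: (eqVneq A B) => [->|neq]; first exact: rt_refl.
apply: rt_step; left; rewrite face2 properEneq neq sAB !properT A0 AT B0 BT /=.
case/or3P: h => h; apply/or3P; [constructor 1|constructor 2|constructor 3];
  apply/existsP; exists G; by rewrite GE h.
Qed.

Lemma chain_compl n (E : {set {set 'I_n}}) (X Y : {set 'I_n}) : coloring_face E [::X; Y] ->
  rt E (~:Y) (~:X).
Proof.
case/face2_dest => pXY /andP[X0 XT] /andP[Y0 YT] [H HE h].
apply: (chain_rt (G := H)) => //.
- by rewrite setCS (proper_sub pXY).
- by rewrite setC0P.
- by rewrite setCTP.
- by rewrite setC0P.
- by rewrite setCTP.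
- rewrite setCK (_ : ~:X :\: ~:Y = Y :\: X); last by rewrite !setDE setCK setIC.
  by case/or3P: h => ->; rewrite ?orbT.
Qed.

Lemma rt_compl n (E : {set {set 'I_n}}) (A B : {set 'I_n}) : rt E A B -> rt E (~:A) (~:B).
Proof.
elim=> [x y h|x|x y z _ h1 _ h2].
- case: h => h; first exact: rt_sym (chain_compl h).
  exact: chain_compl h.
- exact: rt_refl.
- exact: rt_trans h1 h2.
Qed.

Definition wit n (X G : {set 'I_n}) := (G \subset X) || (G \subset ~: X).

Lemma wit_step n (X G G' : {set 'I_n}) : X != set0 -> X != setT ->
  wit X G -> wit X G' -> edge_step G G'.
Proof.
move=> X0 XT; rewrite /wit /edge_step => /orP[]HG /orP[]HG'.
- apply/orP; left; apply: contra XT => /eqP U.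
  by rewrite eqEsubset subsetT /= -U subUset HG HG'.
- apply/orP; right; rewrite disjoints_subset.
  apply: subset_trans HG _; by rewrite subsetC.
- apply/orP; right; rewrite disjoints_subset.
  apply: subset_trans HG _; by rewrite setCS.
- apply/orP; left; apply: contra X0 => /eqP U.
  rewrite -setCTP eqEsubset subsetT /= -U subUset HG HG' //.
Qed.

Definition reach n (E : {set {set 'I_n}}) (F F' : {set 'I_n}) :=
  exists s : seq {set 'I_n},
    [/\ all (fun G => G \in E) s, path (@edge_step n) F s & last F s = F'].

Lemma reach_step n (E : {set {set 'I_n}}) F F' : F' \in E -> edge_step F F' ->
  reach E F F'.
Proof. by move=> h1 h2; exists [:: F']; rewrite /= h1 h2. Qed.

Lemma reach_trans n (E : {set {set 'I_n}}) F M F' : reach E F M -> reach E M F' ->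
  reach E F F'.
Proof.
move=> [s1 [a1 p1 l1]] [s2 [a2 p2 l2]]; exists (s1 ++ s2).
by rewrite all_cat cat_path last_cat l1 a1 a2 p1 p2 l2.
Qed.

Lemma chain_wit n (X Y H : {set 'I_n}) : X \proper Y ->
  [|| H \subset X, H \subset Y :\: X | H \subset ~:Y] -> wit X H && wit Y H.
Proof.
move=> /proper_sub sXY; rewrite /wit; case/or3P => h.
- by rewrite h (subset_trans h sXY).
- move: h; rewrite subsetD disjoints_subset => /andP[-> ->]; by rewrite orbT.
- by rewrite h (subset_trans h (_ : ~:Y \subset ~:X)) ?orbT // setCS.
Qed.

Lemma wit_rt n (E : {set {set 'I_n}}) (A B : {set 'I_n}) : rt E A B -> A != set0 -> A != setT ->
  forall G G', G' \in E -> wit A G -> wit B G' -> reach E G G'.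
Proof.
move/clos_rt_rt1n_iff => h; elim: h => {A B} [A|A M B hAM _ IH] A0 AT G G' G'E wA wB.
- by apply: reach_step => //; apply: wit_step wA wB.
- have [M0 MT [H HE /andP[wAH wMH]]] : [/\ M != set0, M != setT &
      exists2 H, H \in E & wit A H && wit M H].
    case: hAM => /face2_dest [pXY /andP[X0 XT] /andP[Y0 YT] [H HE h]].
    + split => //; exists H => //; exact: chain_wit pXY h.
    + split => //; exists H => //; rewrite andbC; exact: chain_wit pXY h.
  apply: (reach_trans (M := H)); first by apply: reach_step => //; apply: wit_step wA wAH.
  exact: IH.
Qed.

Lemma path_distinct n (E : {set {set 'I_n}}) s (G : {set 'I_n}) : G \in E ->
  all (fun G => G \in E) s -> path (@edge_step n) G s -> last G s != G ->
  exists H H', [/\ H \in E, H' \in E, H != H' & edge_step H H'].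
Proof.
elim: s G => [|a s IH] G GE /=; first by rewrite eqxx.
move=> /andP[aE aS] /andP[st p] l.
case: (eqVneq G a) => [eGa|neq]; last by exists G, a.
subst a; exact: (IH _ aE aS p l).
Qed.

Theorem mainTheorem14 (n : nat) (E : {set {set 'I_n}}) :
  is_hypergraph E ->
  (coloring_connected E <->
   forall F F' : {set 'I_n}, F \in E -> F' \in E ->
     exists s : seq {set 'I_n},
       [/\ all (fun G => G \in E) s, path (@edge_step n) F s & last F s = F']).
Proof.
case=> H0 Hcov H1 Hanti.
have allT : setT \in E -> forall G, G \in E -> G = setT.
  move=> TE G GE; apply/eqP.
  by move: (Hanti G setT GE TE); rewrite properT negbK.
split.
- move=> conn F F' FE F'E.
  have vF : forall G, G \in E -> G != setT -> coloring_face E [:: G].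
    move=> G GE GT; rewrite face1 H0 // properT GT /=.
    apply/orP; left; apply/existsP; exists G; by rewrite GE subxx.
  case: (eqVneq F setT) => [FT|FT].
    have TE : setT \in E by rewrite -FT.
    rewrite (allT TE F' F'E); exists [::]; by rewrite FT.
  case: (eqVneq F' setT) => [F'T|F'T].
    have TE : setT \in E by rewrite -F'T.
    by rewrite (allT TE F FE) eqxx in FT.
  apply: (@wit_rt n E F F' (conn F F' (vF F FE FT) (vF F' F'E F'T)) (H0 F FE) FT F F' F'E);
    by rewrite /wit subxx.
- move=> Hreach A B vA vB.
  have [A0 AT [G0 G0E wA]] := face1_dest vA.
  have [B0 BT [G1 G1E wB]] := face1_dest vB.
  have noT : forall G, G \in E -> G != setT.
    move=> G GE; apply/negP => /eqP GT.
    have TE : setT \in E by rewrite -GT.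
    have G0T := allT TE G0 G0E.
    move: wA; rewrite G0T !subTset setCTP (negbTE AT) (negbTE A0).
    done.
  have toE : forall X G, X != set0 -> X != setT -> G \in E ->
      (G \subset X) || (G \subset ~:X) -> rt E X G \/ rt E X (~:G).
    move=> X G X0 XT GE /orP[h|h].
    + left; apply: rt_sym; apply: (chain_rt (G:=G)) => //; rewrite ?H0 ?noT ?subxx //.
    + right; apply: (chain_rt (G:=G)) => //.
      * by rewrite subsetC.
      * by rewrite setC0P noT.
      * by rewrite setCTP H0.
      * by rewrite setCK subxx !orbT.
  have [F [FE Fbig]] : exists F, F \in E /\ 1 < #|~:F|.
    have: 0 < #|~:G0| by rewrite card_gt0 setC0P noT.
    case/card_gt0P => x xG0.
    have [G GE xG] := Hcov x.
    have [s [aS pS lS]] := Hreach G0 G G0E GE.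
    have ne : last G0 s != G0.
      rewrite lS; apply/eqP => e; by rewrite -e in_setC xG in xG0.
    have [H [H' [HE H'E neq st]]] := path_distinct G0E aS pS ne.
    exists H; split => //.
    case/orP: st => [U|D].
    * have pHU : ~:(H :|: H') \proper ~:H.
        rewrite properC properUl //; apply/negP => sub.
        by move: (Hanti H' H H'E HE); rewrite properEneq eq_sym neq sub.
      have a : 0 < #|~:(H :|: H')| by rewrite card_gt0 setC0P.
      exact: leq_ltn_trans a (proper_card pHU).
    * move: D; rewrite disjoints_subset subsetC => D.
      apply: leq_trans (subset_leq_card D).
      move: (H1 H' H'E) (H0 H' H'E); rewrite -card_gt0.
      by case: #|H'| => [|[|m]].
  have hFF : rt E F (~:F).
    have: 0 < #|~:F| by apply: ltnW.
    case/card_gt0P => x xF.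
    have: 0 < #|~:F :\ x| by move: Fbig; rewrite (cardsD1 x) xF.
    case/card_gt0P => y; rewrite in_setD1 => /andP[yx yF].
    have xnF : x \notin F by rewrite -in_setC.
    have ynF : y \notin F by rewrite -in_setC.
    set B' := x |: F.
    have B0' : B' != set0 by apply/set0Pn; exists x; rewrite setU11.
    have BT' : B' != setT.
      apply/eqP => e; have : y \in B' by rewrite e inE.
      by rewrite in_setU1 (negbTE yx) (negbTE ynF).
    have x0 : [set x] != set0 by apply/set0Pn; exists x; rewrite set11.
    have xT : [set x] != setT.
      apply/eqP => e; have : y \in [set x] by rewrite e inE.
      by rewrite in_set1 (negbTE yx).
    apply: (@rt_trans _ _ _ B').
      apply: (chain_rt (G := F)) => //; rewrite ?subsetU1 ?H0 ?noT ?subxx //.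
    apply: (@rt_trans _ _ _ [set x]).
      apply: rt_sym; apply: (chain_rt (G := F)) => //.
      * by rewrite sub1set setU11.
      * by rewrite subsetD1 subsetU1 xnF orbT.
    apply: (chain_rt (G := F)) => //.
    * by rewrite sub1set.
    * by rewrite setC0P noT.
    * by rewrite setCTP H0.
    * by rewrite setCK subxx !orbT.
  have prop : forall s H, H \in E -> all (fun G => G \in E) s ->
      path (@edge_step n) H s -> rt E H F -> rt E (~:H) F ->
      rt E (last H s) F /\ rt E (~: last H s) F.
    elim=> [|a s IH] H HE //= /andP[aE aS] /andP[st p] h1 h2.
    apply: (IH a aE aS p).
    + case/orP: st => [U|D].
      * have Ua0 : H :|: a != set0.
          by rewrite -card_gt0 (leq_trans _ (subset_leq_card (subsetUr H a))) // card_gt0 H0.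
        have haH : rt E a H.
          apply: (@rt_trans _ _ _ (H :|: a)).
            apply: (chain_rt (G := a)) => //; rewrite ?subsetUr ?H0 ?noT ?subxx //.
          apply: rt_sym; apply: (chain_rt (G := H)) => //; rewrite ?subsetUl ?H0 ?noT ?subxx //.
        exact: rt_trans haH h1.
      * have D' : a \subset ~:H by rewrite subsetC -disjoints_subset.
        have haH : rt E a (~:H).
          apply: (chain_rt (G := a)) => //; rewrite ?setC0P ?setCTP ?H0 ?noT ?subxx //.
        exact: rt_trans haH h2.
    + case/orP: st => [U|D].
      * have Ua0 : H :|: a != set0.
          by rewrite -card_gt0 (leq_trans _ (subset_leq_card (subsetUr H a))) // card_gt0 H0.
        have haH : rt E a H.
          apply: (@rt_trans _ _ _ (H :|: a)).
            apply: (chain_rt (G := a)) => //; rewrite ?subsetUr ?H0 ?noT ?subxx //.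
          apply: rt_sym; apply: (chain_rt (G := H)) => //; rewrite ?subsetUl ?H0 ?noT ?subxx //.
        exact: rt_trans (rt_compl haH) h2.
      * have D' : a \subset ~:H by rewrite subsetC -disjoints_subset.
        have haH : rt E a (~:H).
          apply: (chain_rt (G := a)) => //; rewrite ?setC0P ?setCTP ?H0 ?noT ?subxx //.
        have := rt_compl haH; rewrite setCK => h; exact: rt_trans h h1.
  have allF : forall G, G \in E -> rt E G F /\ rt E (~:G) F.
    move=> G GE; have [s [aS pS lS]] := Hreach F G FE GE.
    rewrite -lS; apply: prop => //; [exact: rt_refl | exact: rt_sym hFF].
  have toF : forall X G, X != set0 -> X != setT -> G \in E ->
      (G \subset X) || (G \subset ~:X) -> rt E X F.
    move=> X G X0 XT GE w; have [h1 h2] := allF G GE.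
    by case: (toE X G X0 XT GE w) => h; [exact: rt_trans h h1 | exact: rt_trans h h2].
  exact: rt_trans (toF A G0 A0 AT G0E wA) (rt_sym (toF B G1 B0 BT G1E wB)).
Qed.
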